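(* Let $(P,\leq)$ be a partially ordered set. If $\tau$ is a compact topology on $P$ such that $\tau_i(P) \subseteq \tau$, then $\tau \subseteq \tau_o(P)$.
   Context: For $x\in P$ let $(x]=\{y\in P: y\leq x\}$ and $[x)=\{y\in P: y\geq x\}$. The interval topology $\tau_i(P)$ is the topology on $P$ generated by the subbase $\{P\setminus (x]: x\in P\}\cup\{P\setminus [x): x\in P\}$. A filter $\mathcal{F}$ on $P$ is a nonempty family of subsets of $P$ with $\emptyset\notin\mathcal{F}$, closed under finite intersections and supersets. For $A\subseteq P$ let $A^l=\{x\in P: x\leq a \text{ for all } a\in A\}$ and $A^u=\{x\in P: x\geq a\text{ for all } a\in A\}$; for a family $\mathcal{S}$ of subsets of $P$ let $\mathcal{S}^l=\bigcup\{S^l: S\in\mathcal{S}\}$ and $\mathcal{S}^u=\bigcup\{S^u:S\in\mathcal{S}\}$. $\bigwedge A$ denotes the greatest element of $A^l$ (if it exists) and $\bigvee A$ the least element of $A^u$ (if it exists). A filter $\mathcal{F}$ order-converges to $x\in P$ if $\bigwedge \mathcal{F}^u = x = \bigvee \mathcal{F}^l$ (both existing). The order convergence topology is $\tau_o(P)=\{U\subseteq P: \text{for every } x\in U \text{ and every filter } \mathcal{F} \text{ on } P \text{ order-converging to } x, \ U\in\mathcal{F}\}$. *)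

(* Defs.v *)
From HB Require Import structures.
From mathcomp Require Import all_boot all_order.
From Stdlib Require Import List.

Set Implicit Arguments.
Unset Strict Implicit.
Unset Printing Implicit Defensive.

Local Open Scope order_scope.

Section Defs.
Context {d : Order.disp_t} {P : porderType d}.

Definition pset := P -> Prop.

Definition is_topology (tau : pset -> Prop) : Prop :=
  tau (fun _ => False) /\ tau (fun _ => True) /\
  (forall C : pset -> Prop, (forall U, C U -> tau U) ->
     tau (fun x => exists U, C U /\ U x)) /\
  (forall U V, tau U -> tau V -> tau (fun x => U x /\ V x)).

Definition compact_top (tau : pset -> Prop) : Prop :=
  forall C : pset -> Prop, (forall U, C U -> tau U) ->
    (forall x, exists U, C U /\ U x) ->
    exists s : list pset, (forall U, In U s -> C U) /\
      (forall x, exists U, In U s /\ U x).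

Definition generated_top (S : pset -> Prop) (U : pset) : Prop :=
  forall tau, is_topology tau -> (forall A, S A -> tau A) -> tau U.

Definition down (x : P) : pset := fun y => y <= x.
Definition up (x : P) : pset := fun y => x <= y.

Definition interval_subbase (A : pset) : Prop :=
  exists x, A = (fun y => ~ down x y) \/ A = (fun y => ~ up x y).

Definition interval_top : pset -> Prop := generated_top interval_subbase.

Definition is_filter (F : pset -> Prop) : Prop :=
  (exists A, F A) /\ ~ F (fun _ => False) /\
  (forall A B, F A -> F B -> F (fun x => A x /\ B x)) /\
  (forall A B, F A -> (forall x, A x -> B x) -> F B).

Definition lowers (A : pset) : pset := fun x => forall a, A a -> x <= a.
Definition uppers (A : pset) : pset := fun x => forall a, A a -> a <= x.

Definition fam_lowers (F : pset -> Prop) : pset :=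
  fun x => exists S, F S /\ lowers S x.
Definition fam_uppers (F : pset -> Prop) : pset :=
  fun x => exists S, F S /\ uppers S x.

Definition is_inf (A : pset) (x : P) : Prop :=
  lowers A x /\ forall y, lowers A y -> y <= x.
Definition is_sup (A : pset) (x : P) : Prop :=
  uppers A x /\ forall y, uppers A y -> x <= y.

Definition order_converges (F : pset -> Prop) (x : P) : Prop :=
  is_inf (fam_uppers F) x /\ is_sup (fam_lowers F) x.

Definition order_top (U : pset) : Prop :=
  forall x, U x -> forall F, is_filter F -> order_converges F x -> F U.

End Defs.

(* Main.v *)
Require Import Defs.
From mathcomp Require Import all_boot all_order.
From Stdlib Require Import List Classical.
Local Open Scope order_scope.

Theorem theorem2p1 (d : Order.disp_t) (P : porderType d) (tau : (P -> Prop) -> Prop) :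
  is_topology tau -> compact_top tau ->
  (forall U : P -> Prop, interval_top U -> tau U) ->
  forall U : P -> Prop, tau U -> order_top U.
Proof.
move=> Htop Hcomp Hint U HU x Ux F [[A0 FA0] [_ [FI FS]]] [[_ Hinf] [_ Hsup]].
set C := fun V : P -> Prop => V = U \/
  (exists b, fam_lowers F b /\ V = fun y => ~ up b y) \/
  (exists a, fam_uppers F a /\ V = fun y => ~ down a y).
have CT : forall V, C V -> tau V.
  move=> V [->|[[b [_ ->]]|[a [_ ->]]]] //; apply: Hint => t _ Hs; apply: Hs.
  - by exists b; right.
  - by exists a; left.
have Ccov : forall z, exists V, C V /\ V z.
  move=> z; case: (classic (U z)) => Uz; first by exists U; split=> //; left.
  case: (classic (exists b, fam_lowers F b /\ ~ up b z)) => [[b [Hb Nb]]|Nb].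
    by exists (fun y => ~ up b y); split=> //; right; left; exists b.
  case: (classic (exists a, fam_uppers F a /\ ~ down a z)) => [[a [Ha Na]]|Na].
    by exists (fun y => ~ down a y); split=> //; right; right; exists a.
  exfalso; apply: Uz.
  have h1 : x <= z.
    apply: Hsup => b Hb; apply: NNPP => H; apply: Nb; by exists b.
  have h2 : z <= x.
    apply: Hinf => a Ha; apply: NNPP => H; apply: Na; by exists a.
  have -> : z = x by apply/Order.POrderTheory.le_anti; rewrite h1 h2.
  done.
have [s [sC scov]] := Hcomp C CT Ccov.
have key : forall s0 : list (P -> Prop), (forall V, In V s0 -> C V) ->
  exists T, F T /\ forall V, In V s0 -> forall y, T y -> V y -> U y.
  elim=> [|V s1 IH] Hs.
    exists (fun _ => True); split; first by apply: (FS A0).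
    by [].
  have [T [FT HT]] := IH (fun W h => Hs W (or_intror h)).
  have [T' [FT' HT']] : exists T', F T' /\ forall y, T' y -> V y -> U y.
    case: (Hs V (or_introl erefl)) => [->|[[b [[S [FS' Hl]] ->]]|[a [[S [FS' Hl]] ->]]]].
    - by exists (fun _ => True); split; [apply: (FS A0)|].
    - by exists S; split=> // y Sy Nb; exfalso; apply: Nb; apply: Hl.
    - by exists S; split=> // y Sy Nb; exfalso; apply: Nb; apply: Hl.
  exists (fun y => T y /\ T' y); split; first by apply: FI.
  move=> W [<-|HW] y [Ty T'y] Wy; first by apply: HT'.
  by apply: (HT W HW).
have [T [FT HT]] := key s sC.
apply: (FS T) => // y Ty.
have [V [HV Vy]] := scov y.
by apply: (HT V HV).
Qed.
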